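(* There is no LCL problem on paths with mending radius between $\omega(1)$ and $o(n)$: if an LCL problem $\Pi$ on the family of all paths is $T$-mendable for some function $T$ with $T(n)=o(n)$, then $\Pi$ is $T'$-mendable for some constant function $T'$.
   Context: A locally verifiable problem $\Pi$ on a graph family $\mathcal{G}$ is given by a set $\Sigma$ of input labels, a set $\Gamma$ of output labels and a verifier $\psi$ with verification radius $r$: $\psi(G,\lambda,v)\in\{\text{happy},\text{unhappy}\}$ depends only on the radius-$r$ neighborhood of $v$ (structure, inputs and outputs, up to isomorphism); $\lambda:V\to\Gamma$ is a solution if $\psi$ is happy everywhere. $\Pi$ is an LCL problem if $\Sigma,\Gamma$ are finite and all graphs in $\mathcal{G}$ have maximum degree bounded by a constant. Partial labelings are maps $\lambda:V\to\Gamma\cup\{\bot\}$; the relaxed verifier $\psi^*$ is happy at $v$ if some node within distance $r$ of $v$ has label $\bot$, and otherwise $\psi^*(G,\lambda,v)=\psi(G,\lambda',v)$ for any $\lambda':V\to\Gamma$ agreeing with $\lambda$ on the radius-$r$ neighborhood of $v$; $\psi^*$ accepts $\lambda$ if happy everywhere. Given $\lambda$ accepted by $\psi^*$ and node $v$, a $t$-mend of $\lambda$ at $v$ is a partial labeling $\mu$ accepted by $\psi^*$ with $\mu(v)\neq\bot$, $\mu(u)=\bot\Rightarrow\lambda(u)=\bot$, and $\mu(u)\neq\lambda(u)\Rightarrow\mathrm{dist}(u,v)\le t$. A verifier is $T$-mendable if for every $G\in\mathcal{G}$ with $n$ nodes, every $\lambda$ accepted by $\psi^*$ and every node $v$, a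 $T(n)$-mend at $v$ exists; $\Pi$ is $T$-mendable if some radius-$r$ verifier for $\Pi$ (accepting exactly the solutions of $\Pi$) is $T$-mendable. *)

(* Defs.v *)
From mathcomp Require Import all_boot.
Set Implicit Arguments. Unset Strict Implicit. Unset Printing Implicit Defensive.

(* A path with n nodes is represented (up to isomorphism) by the vertex set
   'I_n with edges {i, i+1}.  Distance in the path is |u - v|. *)
Definition pdist n (u v : 'I_n) : nat := (u - v) + (v - u).

Definition padj n (u v : 'I_n) : bool := (u.+1 == v :> nat) || (v.+1 == u :> nat).

(* A verifier: given a path with n nodes, an input labeling, an output
   labeling and a node, returns happy (true) / unhappy (false). *)
Definition verifier (Sigma Gamma : Type) :=
  forall n : nat, ('I_n -> Sigma) -> ('I_n -> Gamma) -> 'I_n -> bool.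

Definition ball_iso (Sigma Gamma : Type) (r : nat)
  n (x : 'I_n -> Sigma) (y : 'I_n -> Gamma) (v : 'I_n)
  n' (x' : 'I_n' -> Sigma) (y' : 'I_n' -> Gamma) (v' : 'I_n')
  (f : 'I_n -> 'I_n') : Prop :=
  f v = v' /\
  [/\ (forall u, pdist u v <= r -> pdist (f u) v' <= r),
      (forall u1 u2, pdist u1 v <= r -> pdist u2 v <= r -> f u1 = f u2 -> u1 = u2),
      (forall w, pdist w v' <= r -> exists2 u, pdist u v <= r & f u = w),
      (forall u1 u2, pdist u1 v <= r -> pdist u2 v <= r ->
          padj (f u1) (f u2) = padj u1 u2)
    & (forall u, pdist u v <= r -> x' (f u) = x u /\ y' (f u) = y u)].

Definition local_verifier (Sigma Gamma : Type) (r : nat)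
  (psi : verifier Sigma Gamma) : Prop :=
  forall n x y v n' x' y' v' (f : 'I_n -> 'I_n'),
    @ball_iso Sigma Gamma r n x y v n' x' y' v' f ->
    psi n x y v = psi n' x' y' v'.

Definition same_solutions (Sigma Gamma : Type) (psi psi' : verifier Sigma Gamma) : Prop :=
  forall n (x : 'I_n -> Sigma) (y : 'I_n -> Gamma),
    (forall v, psi n x y v) <-> (forall v, psi' n x y v).

(* Partial labelings: None plays the role of bottom. *)
Definition relaxed_happy (Sigma Gamma : Type) (r : nat) (psi : verifier Sigma Gamma)
  n (x : 'I_n -> Sigma) (lam : 'I_n -> option Gamma) (v : 'I_n) : Prop :=
  (exists2 u, pdist u v <= r & lam u = None) \/
  (forall lam' : 'I_n -> Gamma,
     (forall u, pdist u v <= r -> lam u = Some (lam' u)) -> psi n x lam' v).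

Definition relaxed_accepts (Sigma Gamma : Type) (r : nat) (psi : verifier Sigma Gamma)
  n (x : 'I_n -> Sigma) (lam : 'I_n -> option Gamma) : Prop :=
  forall v, relaxed_happy r psi x lam v.

Definition is_mend (Sigma Gamma : Type) (r : nat) (psi : verifier Sigma Gamma)
  n (x : 'I_n -> Sigma) (lam mu : 'I_n -> option Gamma) (v : 'I_n) (t : nat) : Prop :=
  [/\ relaxed_accepts r psi x mu,
      mu v <> None,
      (forall u, mu u = None -> lam u = None)
    & (forall u, mu u <> lam u -> pdist u v <= t)].

Definition verifier_mendable (Sigma Gamma : Type) (r : nat) (psi : verifier Sigma Gamma)
  (T : nat -> nat) : Prop :=
  forall n (x : 'I_n -> Sigma) (lam : 'I_n -> option Gamma) (v : 'I_n),
    relaxed_accepts r psi x lam ->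
    exists mu, is_mend r psi x lam mu v (T n).

Definition problem_mendable (Sigma Gamma : Type) (r : nat) (psi : verifier Sigma Gamma)
  (T : nat -> nat) : Prop :=
  exists psi' : verifier Sigma Gamma,
    [/\ local_verifier r psi', same_solutions psi psi' & verifier_mendable r psi' T].

Definition little_o_n (T : nat -> nat) : Prop :=
  forall k, 0 < k -> exists N, forall n, N <= n -> k * T n <= n.

(* Main.v *)
Require Import Defs.
From mathcomp Require Import all_boot.
From mathcomp Require Import zify.
Set Implicit Arguments. Unset Strict Implicit.

Lemma shift_lt n m a (H : a + m <= n) (j : 'I_m) : a + j < n.
Proof. apply: leq_trans H; by rewrite ltn_add2l. Qed.

Definition shiftI n m a (H : a + m <= n) (j : 'I_m) : 'I_n := Ordinal (@shift_lt n m a H j).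

Lemma happy_ext (Sigma Gamma : Type) r (psi : verifier Sigma Gamma) n
  (x : 'I_n -> Sigma) (lab lab' : 'I_n -> option Gamma) w :
  (forall u, pdist u w <= r -> lab u = lab' u) ->
  relaxed_happy r psi x lab w -> relaxed_happy r psi x lab' w.
Proof.
move=> E [[u Hu Hn]|H].
  by left; exists u => //; rewrite -E.
right => lam' Hl; apply: H => u Hu; rewrite E //; exact: Hl.
Qed.

Lemma happy_transfer (Sigma Gamma : finType) r (psi : verifier Sigma Gamma)
  (Hloc : local_verifier r psi) m n (f : 'I_m -> 'I_n) a
  (Hf : forall j, val (f j) = a + val j)
  (x2 : 'I_m -> Sigma) x (Hx : forall j, x2 j = x (f j))
  (lab2 : 'I_m -> option Gamma) lab (i : 'I_m)
  (Hsurj : forall w : 'I_n, pdist w (f i) <= r -> exists2 u, pdist u i <= r & f u = w)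
  (Hlab : forall u, pdist u i <= r -> lab2 u = lab (f u)) :
  relaxed_happy r psi x2 lab2 i <-> relaxed_happy r psi x lab (f i).
Proof.
have Hd : forall u v, pdist (f u) (f v) = pdist u v.
  by move=> u v; rewrite /pdist !Hf !subnDl.
have Hinj : forall u v, f u = f v -> u = v.
  move=> u v /(congr1 val); rewrite !Hf => /eqP; rewrite eqn_add2l => /eqP H.
  exact: val_inj.
have key : forall (Y : 'I_m -> Gamma) (Z : 'I_n -> Gamma),
    (forall u, pdist u i <= r -> Z (f u) = Y u) -> psi m x2 Y i = psi n x Z (f i).
  move=> Y Z HZ; apply: (Hloc _ _ _ _ _ _ _ _ f); split => //; split.
  - by move=> u Hu; rewrite Hd.
  - by move=> u1 u2 _ _ /Hinj.
  - exact: Hsurj.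
  - by move=> u1 u2 _ _; rewrite /padj !Hf -!addnS !eqn_add2l.
  - by move=> u Hu; rewrite Hx HZ.
split.
- case=> [[u Hu Hn]|H].
    by left; exists (f u); [rewrite Hd | rewrite -Hlab].
  right => lam' Hl.
  rewrite -(key (fun j => lam' (f j))) //.
  apply: H => u Hu; rewrite Hlab // Hl // Hd //.
- case=> [[w Hw Hn]|H].
    left; have [u Hu Hfu] := Hsurj _ Hw; exists u => //; by rewrite Hlab // Hfu.
  right => Y Hl.
  pose Z := fun w => match [pick u | f u == w] with Some u => Y u | None => Y i end.
  have HZ : forall u, Z (f u) = Y u.
    move=> u; rewrite /Z; case: pickP => [u' /eqP /Hinj -> //|].
    by move/(_ u); rewrite eqxx.
  rewrite (key Y Z); last by move=> u _; rewrite HZ.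
  apply: H => w Hw; have [u Hu <-] := Hsurj _ Hw.
  by rewrite HZ -Hlab // Hl.
Qed.

Lemma ar_defs (v n L : nat) : v < n ->
  (v - L <= v) /\ (0 < v - L -> v - L + L = v) /\ (v <= v - L + L) /\
      (v <= minn (v + L) n.-1) /\ (minn (v + L) n.-1 < n.-1 -> minn (v + L) n.-1 = v + L) /\
      (minn (v + L) n.-1 < n) /\ (minn (v + L) n.-1 <= v + L).
Proof. move=> H; split; [lia|split; [lia|split; [lia|split; [lia|split; [lia|split; lia]]]]]. Qed.

Lemma ar_hab (a b n v : nat) : a <= v -> v <= b -> b < n -> a + (b - a).+1 <= n.
Proof. lia. Qed.

Lemma ar_lt (a b u : nat) : a <= u <= b -> u - a < (b - a).+1.
Proof. lia. Qed.

Lemma ar_win (a b n w i r : nat) : w < n -> b < n -> (0 < a -> r < i) ->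
  (b < n.-1 -> r < (b - a - i) + (i - (b - a))) -> i <= b - a ->
  (w - (a + i)) + ((a + i) - w) <= r -> a <= w <= b.
Proof. lia. Qed.

Lemma ar_dshift (a w i : nat) : a <= w ->
  (w - a - i) + (i - (w - a)) = (w - (a + i)) + ((a + i) - w).
Proof. lia. Qed.

Lemma ar_dshift2 (a w u : nat) : a <= w ->
  (a + u - w) + (w - (a + u)) = (u - (w - a)) + ((w - a) - u).
Proof. lia. Qed.

Lemma ar_d2 (a w w' : nat) : a <= w' -> a <= w ->
  (w' - a - (w - a)) + ((w - a) - (w' - a)) = (w' - w) + (w - w').
Proof. lia. Qed.

Lemma ar_vin (a b v n L : nat) : a <= v -> v <= b -> (0 < a -> a + L = v) ->
  (b < n.-1 -> b = v + L) -> 0 < L ->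
  (a <= v <= b) && ~~ (((v - a == 0) && (0 < a)) || ((v - a == b - a) && (b < n.-1))).
Proof. lia. Qed.

Lemma ar_side (a b u0 n : nat) : u0 < n ->
  ~~ ((a <= u0 <= b) && ~~ (((u0 - a == 0) && (0 < a)) || ((u0 - a == b - a) && (b < n.-1)))) ->
  ((0 < a) && (u0 <= a)) || ((b < n.-1) && (b <= u0)).
Proof. lia. Qed.

Lemma ar_far (v u u0 w L r N Tm a b n : nat) :
  a <= v -> (0 < a -> a + L = v) -> v <= a + L -> v <= b ->
  (b < n.-1 -> b = v + L) -> b <= v + L -> N <= L -> 4 * r + 3 <= L ->
  (u0 - w) + (w - u0) <= r -> (u - w) + (w - u) <= r -> a <= u ->
  ((0 < a) && (u0 <= a)) || ((b < n.-1) && (b <= u0)) ->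
  (N <= (b - a).+1 -> 4 * Tm <= (b - a).+1) ->
  Tm < (u - v) + (v - u).
Proof.
move=> H1 H2 H3 H4 H5 H6 H7 H8 H9 H10 H11 /orP[/andP[H12 H13]|/andP[H12 H13]] HN.
- have E : N <= (b - a).+1 by lia.
  have := HN E; lia.
- have E : N <= (b - a).+1 by lia.
  have := HN E; lia.
Qed.

Lemma ar_fin (a b u v L : nat) : a <= u <= b -> a <= v -> v <= b -> b <= v + L -> v <= a + L ->
  (u - v) + (v - u) <= 2 * L.
Proof. lia. Qed.

Theorem corollary8p3 (Sigma Gamma : finType) (r : nat)
  (psi : verifier Sigma Gamma) (Hloc : local_verifier r psi)
  (T : nat -> nat) (HT : little_o_n T)
  (Hmend : problem_mendable r psi T) :
  exists c : nat, problem_mendable r psi (fun _ => c).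
Proof.
case: Hmend => psi' [Hloc' Hsame Hm].
have [N HN] := HT 4 erefl.
pose L := N + 4 * r + 3.
have HL1 : N <= L by rewrite /L -addnA leq_addr.
have HL2 : 4 * r + 3 <= L by rewrite /L -addnA leq_addl.
clearbody L.
exists (2 * L); exists psi'; split => //.
move=> n x lam v Hacc.
have Hvn : v < n := ltn_ord v.
have [FA [FB [FC [FD [FE [FF FG]]]]]] := @ar_defs v n L Hvn.
move: (v - L) (minn (v + L) n.-1) FA FB FC FD FE FF FG => a b FA FB FC FD FE FF FG.
have Hab : a + (b - a).+1 <= n := ar_hab FA FD FF.
pose f := @shiftI n (b - a).+1 a Hab.
have Hf : forall j, nat_of_ord (f j) = a + nat_of_ord j by [].
pose isart (j : nat) := ((j == 0) && (0 < a)) || ((j == b - a) && (b < n.-1)).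
pose x2 := fun j : 'I_(b - a).+1 => x (f j).
pose lam2 := fun j : 'I_(b - a).+1 => if isart j then None else lam (f j).
have Hvab : a <= v <= b by rewrite FA FD.
pose v' : 'I_(b - a).+1 := inord (v - a).
have Hv' : nat_of_ord v' = v - a by rewrite /v' inordK // ar_lt.
have Hfinord : forall u : 'I_n, a <= u <= b -> f (inord (u - a)) = u.
  move=> u Hu; apply: val_inj.
  change (a + nat_of_ord (@inord (b - a) (u - a)) = nat_of_ord u).
  rewrite inordK ?ar_lt // subnKC //; by case/andP: Hu.
have Hacc2 : relaxed_accepts r psi' x2 lam2.
  move=> i.
  case: (boolP [exists j : 'I_(b - a).+1, isart j && (pdist j i <= r)]).
    move/existsP => [j /andP [Hj1 Hj2]]; left; exists j => //.
    by rewrite /lam2 Hj1.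
  move/existsPn => Hno.
  have H0 : 0 < a -> r < i.
    move=> Ha; have := Hno ord0; rewrite /isart /= Ha /=.
    by rewrite /pdist sub0n subn0 add0n ltnNge.
  have H1 : b < n.-1 -> r < (b - a - i) + (i - (b - a)).
    move=> Hb; have := Hno ord_max; rewrite /isart /= eqxx Hb orbT /=.
    by rewrite /pdist ltnNge.
  have Hi : i <= b - a by rewrite -ltnS ltn_ord.
  refine (proj2 (@happy_transfer _ _ _ _ Hloc' _ _ f a Hf x2 x (fun _ => erefl) lam2 lam i _ _) (Hacc (f i))).
  - move=> w; rewrite /pdist Hf => Hw.
    have Hwab : a <= w <= b := ar_win (ltn_ord w) FF H0 H1 Hi Hw.
    exists (inord (w - a)); last exact: Hfinord.
    rewrite /pdist inordK ?ar_lt // ar_dshift //; by case/andP: Hwab.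
  - move=> u Hu; rewrite /lam2; have := Hno u.
    by case: (isart u) => //=; rewrite Hu.
have [mu2 [Hmacc Hmv Hmnone Hmch]] := Hm _ x2 lam2 v' Hacc2.
pose mu := fun u : 'I_n =>
  if (a <= u <= b) && ~~ isart (u - a) then mu2 (inord (u - a)) else lam u.
have HL0 : 0 < L by apply: leq_trans HL2; rewrite addn3.
have Hvin : (a <= v <= b) && ~~ isart (v - a) := ar_vin FA FD FB FE HL0.
exists mu; split.
- move=> w.
  case: (boolP [forall u : 'I_n, (pdist u w <= r) ==> ((a <= u <= b) && ~~ isart (u - a))]).
    move/forallP => Hall.
    have Hw := Hall w; rewrite /pdist subnn /= in Hw.
    case/andP: Hw => Hwab _.
    have Haw : a <= w by case/andP: Hwab.
    rewrite -(Hfinord w Hwab).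
    refine (proj1 (@happy_transfer _ _ _ _ Hloc' _ _ f a Hf x2 x (fun _ => erefl) mu2 mu _ _ _) _).
    + move=> w'; rewrite (Hfinord w Hwab) => Hw'.
      have := Hall w'; rewrite Hw' /= => /andP [Hw'ab _].
      exists (inord (w' - a)); last exact: Hfinord.
      rewrite /pdist !inordK ?ar_lt // ar_d2 //; by case/andP: Hw'ab.
    + move=> u Hu.
      have Hfu : pdist (f u) w <= r.
        move: Hu; rewrite /pdist Hf inordK ?ar_lt // ar_dshift2 //.
      have := Hall (f u); rewrite Hfu /= => Hin.
      rewrite /mu Hin; congr mu2; apply: val_inj.
      change (nat_of_ord u = nat_of_ord (@inord (b - a) (f u - a))).
      by rewrite inordK Hf addKn.
    + exact: Hmacc.
  move/forallPn => [u0]; rewrite negb_imply => /andP [Hu0w Hu0c].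
  apply: (happy_ext _ (Hacc w)) => u Hu; rewrite /mu; case: ifP => // Hin.
  have Hlu : lam2 (inord (u - a)) = lam u.
    case/andP: Hin => Hin1 Hin2.
    rewrite /lam2 inordK ?ar_lt //.
    by rewrite (negbTE Hin2) Hfinord.
  case E : (mu2 (inord (u - a)) == lam2 (inord (u - a))).
    by rewrite (eqP E) Hlu.
  have Hne : mu2 (inord (u - a)) <> lam2 (inord (u - a)) by move=> H; move: E; rewrite H eqxx.
  have Hd := Hmch _ Hne.
  case/andP: Hin => Hin1 _.
  have Hau : a <= u by case/andP: Hin1.
  have Hav : a <= v by [].
  have Hpd : pdist (@inord (b - a) (u - a)) v' = pdist u v.
    by rewrite /pdist Hv' inordK ?ar_lt // ar_d2.
  have Hside := ar_side (ltn_ord u0) Hu0c.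
  have := ar_far FA FB FC FD FE FG HL1 HL2 Hu0w Hu Hau Hside (HN (b - a).+1).
  by move: Hd; rewrite Hpd /pdist ltnNge => ->.
- by rewrite /mu Hvin.
- move=> u; rewrite /mu; case: ifP => // /andP [Hin Hna] H.
  have := Hmnone _ H; rewrite /lam2 inordK ?ar_lt //.
  by rewrite (negbTE Hna) Hfinord.
- move=> u; rewrite /mu; case: ifP => [/andP [Hin _] _ | _ []//].
  exact: ar_fin Hin FA FD FG FC.
Qed.
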